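(* Let $\Theta$ and $\Theta'$ be spaces of input histories satisfying the free-choice condition, with $E^\Theta\cap E^{\Theta'}=\emptyset$. Then the causal completions of the parallel composition $\Theta\cup\Theta'$ are $$\mathrm{CC}(\Theta\cup\Theta')=\{\hat\Theta\cup\hat\Theta':\ \hat\Theta\in\mathrm{CC}(\Theta),\ \hat\Theta'\in\mathrm{CC}(\Theta')\}.$$
   Context: A partial function is a function $f$ with domain $\mathrm{dom}(f)$ a subset of an index set, taking values in given sets; ordered by restriction ($f\le g$ iff $\mathrm{dom}(f)\subseteq\mathrm{dom}(g)$, $g|_{\mathrm{dom}(f)}=f$). Compatible = agreeing on common domain; a compatible set $\mathcal F$ has join $\bigvee\mathcal F$ (union). A set $\Theta$ is $\vee$-prime if for compatible $\mathcal F\subseteq\Theta$ with $\bigvee\mathcal F\in\Theta$ we have $\bigvee\mathcal F\in\mathcal F$. A space of input histories is a finite $\vee$-prime set of partial functions; $E^\Theta=\bigcup_{h\in\Theta}\mathrm{dom}(h)$, $I^\Theta_\omega=\{h(\omega):h\in\Theta,\omega\in\mathrm{dom}(h)\}$, $\mathrm{Ext}(\Theta)=\{\bigvee\mathcal F:\emptyset\ne\mathcal F\subseteq\Theta\text{ compatible}\}$. Free-choice: maximal elements of $\mathrm{Ext}(\Theta)$ are exactly the total functions in $\prod_{\omega\in E^\Theta}I^\Theta_\omega$. $\mathrm{tips}_\Theta(h)=\mathrm{dom}(h)\setminus\bigcup\{\mathrm{dom}(k):k\in\mathrm{Ext}(\Theta),k<h\}$. Causally complete: free-choice and $|\mathrm{tips}_\Theta(h)|=1$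 for all $h\in\Theta$. Spaces are ordered by $\Theta_1\le\Theta_2$ iff $\mathrm{Ext}(\Theta_1)\supseteq\mathrm{Ext}(\Theta_2)$. The causal completions $\mathrm{CC}(\Theta)$ of a space $\Theta$ satisfying free choice are the maximal elements of $\{\Theta_1\le\Theta:\Theta_1\text{ causally complete}\}$. The parallel composition of spaces with disjoint event sets is their set-theoretic union. *)

(* Defs.v *)
From HB Require Import structures.
From mathcomp Require Import all_boot.
From mathcomp Require Export finmap.
Set Implicit Arguments. Unset Strict Implicit. Unset Printing Implicit Defensive.
Local Open Scope fset_scope.
Local Open Scope fmap_scope.

Section Histories.
Variables (Ev V : choiceType).

Definition pfun := {fmap Ev -> V}.

Definition pf_le (f g : pfun) : Prop :=
  domf f `<=` domf g /\ forall x, x \in domf f -> g.[? x] = f.[? x].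

Definition pf_lt (f g : pfun) : Prop := pf_le f g /\ f <> g.

Definition compatible (F : {fset pfun}) : Prop :=
  forall f g, f \in F -> g \in F ->
  forall x, x \in domf f -> x \in domf g -> f.[? x] = g.[? x].

Definition is_join (F : {fset pfun}) (k : pfun) : Prop :=
  (forall x, x \in domf k <-> exists2 f, f \in F & x \in domf f) /\
  (forall f, f \in F -> pf_le f k).

Definition vee_prime (Th : {fset pfun}) : Prop :=
  forall F : {fset pfun}, F `<=` Th -> compatible F ->
  forall k, is_join F k -> k \in Th -> k \in F.

(* Space of input histories: finite (built into {fset _}) ∨-prime set. *)
Definition space (Th : {fset pfun}) : Prop := vee_prime Th.

Definition in_events (Th : {fset pfun}) (w : Ev) : Prop :=
  exists2 h, h \in Th & w \in domf h.

Definition in_inputs (Th : {fset pfun}) (w : Ev) (v : V) : Prop :=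
  exists2 h, h \in Th & h.[? w] = Some v.

Definition Ext (Th : {fset pfun}) (k : pfun) : Prop :=
  exists F : {fset pfun},
    [/\ F != fset0, F `<=` Th, compatible F & is_join F k].

Definition maximal_Ext (Th : {fset pfun}) (k : pfun) : Prop :=
  Ext Th k /\ forall k', Ext Th k' -> pf_le k k' -> k' = k.

Definition total_in (Th : {fset pfun}) (k : pfun) : Prop :=
  (forall w, w \in domf k <-> in_events Th w) /\
  (forall w v, k.[? w] = Some v -> in_inputs Th w v).

Definition free_choice (Th : {fset pfun}) : Prop :=
  forall k, maximal_Ext Th k <-> total_in Th k.

Definition tips (Th : {fset pfun}) (h : pfun) (w : Ev) : Prop :=
  w \in domf h /\ ~ (exists k, [/\ Ext Th k, pf_lt k h & w \in domf k]).

Definition causally_complete (Th : {fset pfun}) : Prop :=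
  free_choice Th /\ forall h, h \in Th -> exists! w, tips Th h w.

Definition space_le (Th1 Th2 : {fset pfun}) : Prop :=
  forall k, Ext Th2 k -> Ext Th1 k.

Definition CC (Th Th1 : {fset pfun}) : Prop :=
  [/\ space Th1, space_le Th1 Th, causally_complete Th1 &
      forall Th2, space Th2 -> space_le Th2 Th -> causally_complete Th2 ->
        space_le Th1 Th2 -> Th2 = Th1].

End Histories.

(* Main.v *)
Require Import Defs.
From mathcomp Require Import all_boot finmap.
From Stdlib Require Import Classical ClassicalEpsilon.
Set Implicit Arguments. Unset Strict Implicit. Unset Printing Implicit Defensive.
Local Open Scope fset_scope.
Local Open Scope fmap_scope.

Section S.
Variables (Ev V : choiceType).
Local Notation pf := (pfun Ev V).
Implicit Types (f g h k t : pf) (Th : {fset pf}).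

Lemma domE f x : (x \in domf f) = isSome f.[? x].
Proof. by rewrite fndSome. Qed.

Lemma leP f g : pf_le f g <-> forall x v, f.[? x] = Some v -> g.[? x] = Some v.
Proof.
split=> [[s e] x v fx|H].
  have xf : x \in domf f by rewrite domE fx.
  by rewrite e // fx.
split.
  apply/fsubsetP=> x; rewrite !domE; case E: (f.[? x]) => [v|] //.
  by rewrite (H _ _ E).
move=> x; rewrite domE; case E: (f.[? x]) => [v|] //= _.
by rewrite (H _ _ E).
Qed.

Lemma le_refl f : pf_le f f.
Proof. by apply/leP. Qed.

Lemma le_trans f g h : pf_le f g -> pf_le g h -> pf_le f h.
Proof. by move=> /leP a /leP b; apply/leP=> x v /a /b. Qed.

Lemma le_dom f g x : pf_le f g -> x \in domf f -> x \in domf g.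
Proof. by case=> /fsubsetP s _ /s. Qed.

Lemma le_eq f g : pf_le f g -> (forall x, x \in domf g -> x \in domf f) -> f = g.
Proof.
move=> /leP H D; apply/fmapP=> x.
case E: (f.[? x]) => [v|]; first by rewrite (H _ _ E).
case E2: (g.[? x]) => [w|] //.
have : x \in domf f by apply: D; rewrite domE E2.
by rewrite domE E.
Qed.

Lemma le_anti f g : pf_le f g -> pf_le g f -> f = g.
Proof. by move=> a b; apply: le_eq a _ => x; apply: le_dom b. Qed.

Definition ExtC Th k :=
  (exists2 g, g \in Th & pf_le g k) /\
  forall x, x \in domf k -> exists g, [/\ g \in Th, pf_le g k & x \in domf g].

Definition asb (P : Prop) : bool := if excluded_middle_informative P then true else false.
Lemma asbP (P : Prop) : reflect P (asb P).
Proof. by rewrite /asb; case: excluded_middle_informative => p; constructor. Qed.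

Lemma ExtE Th k : Ext Th k <-> ExtC Th k.
Proof.
split.
  case=> F [F0 FT _ [J1 J2]]; split.
    case: (fset_0Vmem F) => [E|[g gF]]; first by rewrite E eqxx in F0.
    by exists g; [apply: (fsubsetP FT) | apply: J2].
  move=> x /J1 [g gF xg]; exists g; split=> //; [exact: (fsubsetP FT) | exact: J2].
case=> [[g0 g0T g0k] C].
exists [fset g in Th | asb (pf_le g k)]; split.
- apply/negP=> /eqP E; have : g0 \in [fset g in Th | asb (pf_le g k)].
    by rewrite !inE g0T /=; apply/asbP.
  by rewrite E.
- by apply/fsubsetP=> g; rewrite !inE => /andP[].
- move=> f g; rewrite !inE => /andP[_ /asbP /leP a] /andP[_ /asbP /leP b] x.
  rewrite !domE; case E1: (f.[? x]) => [v|] //; case E2: (g.[? x]) => [w|] // _ _.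
  by move: (a _ _ E1) (b _ _ E2) => ->.
- split; last by move=> f; rewrite !inE => /andP[_ /asbP].
  move=> x; split; first by move=> /C [g [gT gk xg]]; exists g => //; rewrite !inE gT /=; apply/asbP.
  by case=> g; rewrite !inE => /andP[_ /asbP gk]; apply: le_dom.
Qed.

Lemma compat_le (F : {fset pf}) k : (forall f, f \in F -> pf_le f k) -> compatible F.
Proof.
move=> H f g /H /leP a /H /leP b x.
rewrite !domE; case E1: (f.[? x]) => [v|] //; case E2: (g.[? x]) => [w|] // _ _.
by move: (a _ _ E1) (b _ _ E2) => ->.
Qed.

Definition VPC Th := forall k, k \in Th ->
  exists2 x, x \in domf k & forall g, g \in Th -> pf_lt g k -> x \notin domf g.

Lemma VPE Th : vee_prime Th <-> VPC Th.
Proof.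
split.
  move=> H k kT; apply: NNPP => N.
  have C : forall x, x \in domf k -> exists g, [/\ g \in Th, pf_lt g k & x \in domf g].
    move=> x xk; apply: NNPP => N2; apply: N; exists x => // g gT gk.
    by apply/negP => xg; apply: N2; exists g.
  have : k \in [fset g in Th | asb (pf_lt g k)].
    apply: H.
    - by apply/fsubsetP=> g; rewrite !inE => /andP[].
    - by apply: (@compat_le _ k) => g; rewrite !inE => /andP[_ /asbP []].
    - split; last by move=> g; rewrite !inE => /andP[_ /asbP []].
      move=> x; split; first by move=> /C [g [gT gk xg]]; exists g => //; rewrite !inE gT; apply/asbP.
      by case=> g; rewrite !inE => /andP[_ /asbP [gk _]]; apply: le_dom.
    - done.
  by rewrite !inE => /andP[_ /asbP [_]].
move=> H F FT _ k [J1 J2] kT; apply: NNPP => kF.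
case: (H k kT) => x /J1 [f fF xf] N.
have fk : pf_lt f k by split; [apply: J2 | move=> E; apply: kF; rewrite -E].
by move: (N f (fsubsetP FT _ fF) fk); rewrite xf.
Qed.

Lemma space_nonempty Th h : space Th -> h \in Th -> exists x, x \in domf h.
Proof. by move=> /VPE H /H [x xh _]; exists x. Qed.

Lemma space_sub Th Th1 : space Th -> Th1 `<=` Th -> space Th1.
Proof.
move=> /VPE H S; apply/VPE => k kT.
case: (H k (fsubsetP S _ kT)) => x xk N; exists x => // g gT; exact: N (fsubsetP S _ gT).
Qed.

Lemma Ext_in Th h : h \in Th -> Ext Th h.
Proof.
move=> hT; apply/ExtE; split; first by exists h => //; apply: le_refl.
by move=> x xh; exists h; split => //; apply: le_refl.
Qed.

Lemma Ext_closed Th1 Th2 : (forall g, g \in Th1 -> Ext Th2 g) ->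
  forall k, Ext Th1 k -> Ext Th2 k.
Proof.
move=> H k /ExtE [[g0 g0T g0k] C]; apply/ExtE; split.
  have := H _ g0T; case/ExtE => [[g gT gg0] _]; exists g => //; exact: le_trans gg0 g0k.
move=> x /C [g [gT gk xg]]; have := H _ gT; case/ExtE => [_ /(_ x xg) [e [eT eg xe]]].
by exists e; split => //; exact: le_trans eg gk.
Qed.

Lemma Ext_mono Th1 Th2 : Th1 `<=` Th2 -> forall k, Ext Th1 k -> Ext Th2 k.
Proof. by move=> S; apply: Ext_closed => g gT; apply: Ext_in; apply: (fsubsetP S). Qed.

Lemma space_eq Th1 Th2 : space Th1 -> space Th2 ->
  (forall k, Ext Th1 k <-> Ext Th2 k) -> Th1 = Th2.
Proof.
have side : forall A B, space A -> space B -> (forall k, Ext A k <-> Ext B k) ->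
    forall h, h \in A -> h \in B.
  move=> A B /VPE sA _ E h hA; apply: NNPP => hB.
  case: (sA h hA) => x xh N.
  have := proj1 (E h) (Ext_in hA); case/ExtE => [_ /(_ x xh) [g [gB gh xg]]].
  have gA : Ext A g by apply/E; apply: Ext_in.
  case/ExtE: gA => [_ /(_ x xg) [e [eA eg xe]]].
  have el : pf_lt e h.
    split; first exact: le_trans eg gh.
    move=> ee; subst e; apply: hB; by rewrite -(le_anti gh eg).
  by move: (N e eA el); rewrite xe.
move=> s1 s2 E; apply/fsetP => h; apply/idP/idP; first exact: side.
by apply: side => // k; split => /E.
Qed.

Definition Pin Th k := (forall w, w \in domf k -> in_events Th w) /\
  (forall w v, k.[? w] = Some v -> in_inputs Th w v).

Lemma Ext_Pin Th k : Ext Th k -> Pin Th k.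
Proof.
case/ExtE => _ C; split.
  by move=> w /C [g [gT _ wg]]; exists g.
move=> w v kw; have : w \in domf k by rewrite domE kw.
move=> /C [g [gT /leP gk wg]]; exists g => //.
move: wg; rewrite domE; case E: (g.[? w]) => [u|] // _.
by move: (gk _ _ E); rewrite kw.
Qed.

Lemma Pin_le Th f k : pf_le f k -> Pin Th k -> Pin Th f.
Proof.
move=> fk [A B]; split; first by move=> w wf; apply: A; apply: le_dom fk wf.
by move=> w v fw; apply: B; move/leP: fk; apply.
Qed.

Lemma extend_seq Th k (s : seq pf) : Pin Th k -> (forall h, h \in s -> h \in Th) ->
  exists t, [/\ pf_le k t, Pin Th t & forall h, h \in s -> forall x, x \in domf h -> x \in domf t].
Proof.
move=> Pk; elim: s => [|h s IH] hs.
  by exists k; split => //; apply: le_refl.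
case: IH => [g gs|t [kt Pt D]]; first by apply: hs; rewrite inE gs orbT.
have hT : h \in Th by apply: hs; rewrite inE eqxx.
exists (h + t); split.
- apply: le_trans kt _; apply/leP => x v tx; rewrite fnd_cat.
  by have -> : x \in domf t by rewrite domE tx.
- case: Pt => [A B]; split.
    by move=> w; rewrite domf_cat in_fsetU => /orP[wh|/A //]; exists h.
  move=> w v; rewrite fnd_cat; case: ifP => _; first exact: B.
  by move=> hw; exists h.
- move=> g; rewrite inE => /orP[/eqP ->|gs] x xg; rewrite domf_cat in_fsetU.
    by rewrite xg.
  by rewrite (D g gs x xg) orbT.
Qed.

Lemma extend Th k : Pin Th k -> exists t, pf_le k t /\ total_in Th t.
Proof.
move=> Pk; case: (@extend_seq Th k Th Pk) => // t [kt Pt D].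
exists t; split => //; split; last by case: Pt.
move=> w; split; first by case: Pt => A _ /A.
by case=> h hT wh; apply: D wh.
Qed.

Lemma FC Th : (forall t, total_in Th t -> Ext Th t) -> free_choice Th.
Proof.
move=> H k; split.
  case=> kE M; case: (extend (Ext_Pin kE)) => t [kt Tt].
  by rewrite -(M t (H t Tt) kt).
move=> Tk; split; first exact: H.
move=> k' /Ext_Pin [A _] kk'; symmetry; apply: le_eq kk' _ => x /A.
by case: Tk => D _ /D.
Qed.

Lemma FC_Ext Th t : free_choice Th -> total_in Th t -> Ext Th t.
Proof. by move=> H /H []. Qed.

Lemma ev_le A B w : (forall k, Ext B k -> Ext A k) -> in_events B w -> in_events A w.
Proof.
move=> H [h hB wh]; have := H h (Ext_in hB); case/ExtE => [_ /(_ w wh) [g [gA _ wg]]].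
by exists g.
Qed.

Lemma inp_le A B w v : (forall k, Ext B k -> Ext A k) -> in_inputs B w v -> in_inputs A w v.
Proof.
move=> H [h hB hw]; have wh : w \in domf h by rewrite domE hw.
have := H h (Ext_in hB); case/ExtE => [_ /(_ w wh) [g [gA /leP gh wg]]].
exists g => //; move: wg; rewrite domE; case E: (g.[? w]) => [u|] // _.
by move: (gh _ _ E); rewrite hw.
Qed.

Lemma Pin_cover Th A k : (forall g, g \in A -> Pin Th g) -> Ext A k -> Pin Th k.
Proof.
move=> H /ExtE [_ C]; split.
  by move=> w /C [g [gA _ wg]]; case: (H g gA) => D _; apply: D.
move=> w v kw; have : w \in domf k by rewrite domE kw.
move=> /C [g [gA /leP gk wg]]; case: (H g gA) => _ I; apply: I.
move: wg; rewrite domE; case E: (g.[? w]) => [u|] // _.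
by move: (gk _ _ E); rewrite kw => ->.
Qed.

Definition Res Th Th1 := [fset h in Th1 | asb (Pin Th h)].

Lemma Res_sub Th Th1 : Res Th Th1 `<=` Th1.
Proof. by apply/fsubsetP => h; rewrite !inE => /andP[]. Qed.

Lemma Res_Pin Th Th1 h : h \in Res Th Th1 -> Pin Th h.
Proof. by rewrite !inE => /andP[_ /asbP]. Qed.

Lemma Ext_Res Th Th1 k : Ext (Res Th Th1) k <-> Ext Th1 k /\ Pin Th k.
Proof.
split.
  move=> E; split; first exact: Ext_mono (Res_sub _ _) _ E.
  by apply: Pin_cover E => g; apply: Res_Pin.
case=> /ExtE [[g0 g0T g0k] C] Pk; apply/ExtE; split.
  by exists g0 => //; rewrite !inE g0T; apply/asbP; apply: Pin_le Pk.
move=> x /C [g [gT gk xg]]; exists g; split => //.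
by rewrite !inE gT; apply/asbP; apply: Pin_le Pk.
Qed.

Definition cand Th Th1 := [/\ space Th1, space_le Th1 Th & causally_complete Th1].

Lemma tips_eq A B h w : (forall k, pf_lt k h -> (Ext A k <-> Ext B k)) ->
  tips A h w -> tips B h w.
Proof.
move=> H [wh N]; split => // [[k [kB kh wk]]]; apply: N; exists k; split => //.
by apply/(H _ kh).
Qed.

Lemma Res_cand Th Th1 : free_choice Th -> space Th1 -> space_le Th1 Th ->
  (forall h, h \in Th1 -> exists! w, tips Th1 h w) -> cand Th (Res Th Th1).
Proof.
move=> fc s1 le1 T1.
have leR : space_le (Res Th Th1) Th.
  by move=> k kE; apply/Ext_Res; split; [apply: le1 | apply: Ext_Pin].
split => //; first exact: space_sub s1 (Res_sub _ _).
split.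
  apply: FC => t [D I]; apply: (leR); apply: FC_Ext fc _; split.
    move=> w; rewrite D; split; last exact: ev_le leR.
    by case=> h /Res_Pin [P _] /P.
  by move=> w v /I [h /Res_Pin [_ P] /P].
move=> h hR; have hT := fsubsetP (Res_sub _ _) _ hR.
have Ph := Res_Pin hR.
have EQ : forall k, pf_lt k h -> (Ext Th1 k <-> Ext (Res Th Th1) k).
  move=> k [kh _]; rewrite Ext_Res; split; [move=> ?; split => // | by case].
  exact: Pin_le kh Ph.
case: (T1 h hT) => w [tw U]; exists w; split; first exact: tips_eq tw.
move=> w' tw'; apply: U; apply: tips_eq tw' => k kh; symmetry; exact: EQ.
Qed.

Lemma Res_id Th Th1 : (forall h, h \in Th1 -> Pin Th h) -> Res Th Th1 = Th1.
Proof.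
move=> H; apply/fsetP => h; rewrite !inE; case hT: (h \in Th1) => //=.
by apply/asbP; apply: H.
Qed.

Lemma CC_Pin Th Th1 : free_choice Th -> CC Th Th1 -> forall h, h \in Th1 -> Pin Th h.
Proof.
move=> fc [s1 le1 [fc1 T1] M].
case: (Res_cand fc s1 le1 T1) => sR leR ccR.
have E : Res Th Th1 = Th1.
  apply: M => // k /Ext_Res []; done.
by move=> h; rewrite -E; apply: Res_Pin.
Qed.

Implicit Types (A B : {fset pf}).

Definition Disj Th Th' := forall w, in_events Th w -> ~ in_events Th' w.

Lemma Disj_sym Th Th' : Disj Th Th' -> Disj Th' Th.
Proof. by move=> D w a b; apply: D b a. Qed.

Lemma Ext_left Th Th' A B k : Disj Th Th' -> space B ->
  (forall g, g \in B -> Pin Th' g) ->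
  (forall x, x \in domf k -> in_events Th x) ->
  Ext (A `|` B) k -> Ext A k.
Proof.
move=> D sB PB Dk.
have noB : forall g, g \in B -> pf_le g k -> False.
  move=> g gB gk; case: (space_nonempty sB gB) => x xg.
  case: (PB g gB) => P _; apply: (D x); [apply: Dk; exact: le_dom gk xg | exact: P].
case/ExtE => [[g0 g0T g0k] C]; apply/ExtE; split.
  exists g0 => //; move: g0T; rewrite in_fsetU => /orP[//|/noB]; by move/(_ g0k).
move=> x /C [g [gT gk xg]]; exists g; split => //.
by move: gT; rewrite in_fsetU => /orP[//|/noB]; move/(_ gk).
Qed.

Lemma fc_nonempty A : free_choice A -> exists2 g, g \in A & True.
Proof.
move=> fc; have P0 : Pin A ([fmap] : pf).
  by split => [w|w v]; rewrite ?fnd_fmap0 // domE fnd_fmap0.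
case: (extend P0) => t [_ Tt]; case/ExtE: (FC_Ext fc Tt) => [[g gA _] _].
by exists g.
Qed.

Lemma restrict_total Th Th' A B t : Disj Th Th' -> free_choice A ->
  (forall g, g \in A -> Pin Th g) -> (forall g, g \in B -> Pin Th' g) ->
  total_in (A `|` B) t ->
  exists ta, pf_le ta t /\ Ext A ta /\ (forall x, in_events A x -> x \in domf ta).
Proof.
move=> D fc PA PB [Dt It].
have P0 : Pin A ([fmap] : pf).
  by split => [w|w v]; rewrite ?fnd_fmap0 // domE fnd_fmap0.
case: (extend P0) => t0 [_ [D0 _]].
have evU : forall x, in_events A x -> in_events (A `|` B) x.
  by move=> x [h hA xh]; exists h => //; rewrite in_fsetU hA.
exists (t.[& domf t0]); split; [|split].
- by apply/leP => x v; rewrite fnd_restrict; case: ifP.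
- apply: FC_Ext fc _; split.
    move=> w; rewrite domf_restrict in_fsetI -D0; split; first by case/andP.
    by move=> ew; rewrite ew /=; apply/Dt/evU/D0.
  move=> w v; rewrite fnd_restrict; case: ifP => // /D0 ew /It [h].
  rewrite in_fsetU => /orP[hA|hB] hw; first by exists h.
  exfalso.
  have wh : w \in domf h by rewrite domE hw.
  case: ew => g gA wg; apply: (D w); first by case: (PA g gA) => P _; apply: P.
  by case: (PB h hB) => P _; apply: P.
- by move=> x ex; rewrite domf_restrict in_fsetI; apply/andP; split; [apply/D0 | apply/Dt/evU].
Qed.

Lemma vpc_side Th Th' A B k : Disj Th Th' -> space A ->
  (forall g, g \in A -> Pin Th g) -> (forall g, g \in B -> Pin Th' g) -> k \in A ->
  exists2 x, x \in domf k & forall g, g \in A `|` B -> pf_lt g k -> x \notin domf g.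
Proof.
move=> D /VPE sA PA PB kA; case: (sA k kA) => x xk N; exists x => // g.
rewrite in_fsetU => /orP[gA|gB] gk; first exact: N.
apply/negP => xg; apply: (D x); first by case: (PA k kA) => P _; apply: P.
by case: (PB g gB) => P _; apply: P.
Qed.

Lemma cover_side Th Th' A B t x : Disj Th Th' -> free_choice A ->
  (forall g, g \in A -> Pin Th g) -> (forall g, g \in B -> Pin Th' g) ->
  total_in (A `|` B) t -> in_events A x ->
  exists g, [/\ g \in A `|` B, pf_le g t & x \in domf g].
Proof.
move=> D fc PA PB Tt ex.
case: (restrict_total D fc PA PB Tt) => ta [tat [Eta Dta]].
case/ExtE: Eta => _ /(_ x (Dta x ex)) [g [gA gta xg]].
by exists g; split => //; [rewrite in_fsetU gA | apply: le_trans gta tat].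
Qed.

Lemma tips_side Th Th' A B h w : Disj Th Th' -> space B ->
  (forall g, g \in A -> Pin Th g) -> (forall g, g \in B -> Pin Th' g) -> h \in A ->
  (tips A h w <-> tips (A `|` B) h w).
Proof.
move=> D sB PA PB hA.
have EQ : forall k, pf_lt k h -> (Ext A k <-> Ext (A `|` B) k).
  move=> k [kh _]; split; first exact: Ext_mono (fsubsetUl _ _) _.
  apply: Ext_left D sB PB _ => x xk; case: (PA h hA) => P _; apply: P.
  exact: le_dom kh xk.
split; apply: tips_eq => k kh; [|symmetry]; exact: EQ.
Qed.

Lemma union_cand Th Th' A B : Disj Th Th' -> cand Th A -> cand Th' B ->
  (forall g, g \in A -> Pin Th g) -> (forall g, g \in B -> Pin Th' g) ->
  cand (Th `|` Th') (A `|` B).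
Proof.
move=> D [sA leA [fcA TA]] [sB leB [fcB TB]] PA PB.
have D' := Disj_sym D.
split.
- apply/VPE => k; rewrite in_fsetU => /orP[kA|kB].
    exact: vpc_side D sA PA PB kA.
  rewrite fsetUC; exact: vpc_side D' sB PB PA kB.
- apply: Ext_closed => g; rewrite in_fsetU => /orP[gT|gT].
    by apply: Ext_mono (fsubsetUl _ _) _ _; apply: leA; apply: Ext_in.
  by apply: Ext_mono (fsubsetUr _ _) _ _; apply: leB; apply: Ext_in.
split.
  apply: FC => t Tt; apply/ExtE; split.
    case: (restrict_total D fcA PA PB Tt) => ta [tat [Eta _]].
    case/ExtE: Eta => [[g gA gta] _]; exists g; first by rewrite in_fsetU gA.
    exact: le_trans gta tat.
  move=> x /(proj1 Tt) [h]; rewrite in_fsetU => /orP[hA|hB] xh.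
    by apply: cover_side D fcA PA PB Tt _; exists h.
  have Tt' : total_in (B `|` A) t by rewrite fsetUC.
  case: (cover_side D' fcB PB PA Tt' (ex_intro2 _ _ h hB xh)) => g [gU gt xg].
  by exists g; split => //; rewrite fsetUC.
move=> h; rewrite in_fsetU => /orP[hA|hB].
  case: (TA h hA) => w [tw U]; exists w; split.
    exact: (proj1 (tips_side w D sB PA PB hA) tw).
  by move=> w' tw'; apply: U; exact: (proj2 (tips_side w' D sB PA PB hA) tw').
case: (TB h hB) => w [tw U]; exists w; rewrite fsetUC; split.
  exact: (proj1 (tips_side w D' sA PB PA hB) tw).
by move=> w' tw'; apply: U; exact: (proj2 (tips_side w' D' sA PB PA hB) tw').
Qed.

Lemma PinPin Th Th' h x : Disj Th Th' -> Pin Th h -> Pin Th' h -> x \in domf h -> False.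
Proof. by move=> D [P _] [P' _] xh; apply: (D x); [apply: P | apply: P']. Qed.

Lemma fwd_side Th Th' Th2 : Disj Th Th' -> free_choice Th -> free_choice Th' ->
  CC (Th `|` Th') Th2 ->
  Th2 = Res Th Th2 `|` Res Th' Th2 /\ CC Th (Res Th Th2).
Proof.
move=> D fc fc' [s2 le2 [fc2 T2] M].
have cA : cand Th (Res Th Th2).
  apply: Res_cand fc s2 _ T2 => k E; apply: le2; exact: Ext_mono (fsubsetUl _ _) _ E.
have cB : cand Th' (Res Th' Th2).
  apply: Res_cand fc' s2 _ T2 => k E; apply: le2; exact: Ext_mono (fsubsetUr _ _) _ E.
have cAB := union_cand D cA cB (@Res_Pin _ _) (@Res_Pin _ _).
have subAB : Res Th Th2 `|` Res Th' Th2 `<=` Th2.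
  by rewrite fsubUset !Res_sub.
have EQ : Res Th Th2 `|` Res Th' Th2 = Th2.
  case: cAB => sAB leAB ccAB; apply: M => //; exact: Ext_mono subAB.
split; first by rewrite EQ.
case: cA => sA leA ccA; split => // Th3 s3 le3 [fc3 T3] H3.
have c3 : cand Th (Res Th Th3) := Res_cand fc s3 le3 T3.
have cU := union_cand D c3 cB (@Res_Pin _ _) (@Res_Pin _ _).
have EQ2 : Res Th Th3 `|` Res Th' Th2 = Th2.
  case: cU => sU leU ccU; apply: M => //.
  apply: Ext_closed => g; rewrite in_fsetU => /orP[gA|gB].
    apply: Ext_mono (Res_sub Th Th2) _ _; apply: H3.
    exact: Ext_mono (Res_sub _ _) _ (Ext_in gA).
  exact: Ext_mono (Res_sub _ _) _ (Ext_in gB).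
have E3 : Res Th Th3 = Res Th Th2.
  case: c3 => s3' _ _.
  apply/fsetP => h; apply/idP/idP => hin.
    have : h \in Res Th Th2 `|` Res Th' Th2 by rewrite EQ -EQ2 in_fsetU hin.
    rewrite in_fsetU => /orP[hA0|hB]; first exact: hA0; exfalso.
    case: (space_nonempty s3' hin) => x xh.
    exact: PinPin D (Res_Pin hin) (Res_Pin hB) xh.
  have : h \in Res Th Th3 `|` Res Th' Th2 by rewrite EQ2 -EQ in_fsetU hin.
  rewrite in_fsetU => /orP[hA0|hB]; first exact: hA0; exfalso.
  case: (space_nonempty sA hin) => x xh.
  exact: PinPin D (Res_Pin hin) (Res_Pin hB) xh.
apply: space_eq => // k; split; first exact: H3.
by rewrite -E3 => /Ext_mono; apply; apply: Res_sub.
Qed.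
End S.

Unset Implicit Arguments.
Set Strict Implicit.

Theorem theorem1 (Ev V : choiceType) (Th Th' : {fset pfun Ev V}) :
  space Th -> space Th' -> free_choice Th -> free_choice Th' ->
  (forall w, in_events Th w -> ~ in_events Th' w) ->
  forall Th2 : {fset pfun Ev V},
    CC (Th `|` Th') Th2 <->
    exists Thh Thh', [/\ CC Th Thh, CC Th' Thh' & Th2 = Thh `|` Thh'].
Proof.
move=> sT sT' fc fc' D Th2; have D' := Disj_sym D; split.
  move=> C; case: (fwd_side D fc fc' C) => EQ CA.
  have C' : CC (Th' `|` Th) Th2 by rewrite fsetUC.
  case: (fwd_side D' fc' fc C') => _ CB.
  by exists (Res Th Th2), (Res Th' Th2).
case=> [A [B [CA CB ->]]].
have PA := CC_Pin fc CA; have PB := CC_Pin fc' CB.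
case: (CA) => sA leA ccA MA; case: (CB) => sB leB ccB MB.
have cU : cand (Th `|` Th') (A `|` B) by apply: union_cand.
case: cU => sU leU ccU; split => // Th3 s3 le3 [fc3 T3] H3.
have c3a : cand Th (Res Th Th3).
  apply: Res_cand fc s3 _ T3 => k E; apply: le3; exact: Ext_mono (fsubsetUl _ _) _ E.
have c3b : cand Th' (Res Th' Th3).
  apply: Res_cand fc' s3 _ T3 => k E; apply: le3; exact: Ext_mono (fsubsetUr _ _) _ E.
have EA : Res Th Th3 = A.
  case: c3a => s a c; apply: MA => // k /Ext_Res [E3 Pk].
  apply: (Ext_left D sB PB) (H3 _ E3) => x xk; by case: Pk => P _; apply: P.
have EB : Res Th' Th3 = B.
  case: c3b => s a c; apply: MB => // k /Ext_Res [E3 Pk].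
  have := H3 _ E3; rewrite fsetUC; apply: (Ext_left D' sA PA) => x xk.
  by case: Pk => P _; apply: P.
apply: space_eq => // k; split; first exact: H3.
rewrite -EA -EB; apply: Ext_mono; by rewrite fsubUset !Res_sub.
Qed.
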